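(* For all integers $n,m\ge 0$, \[ U_{n+m}(x,y,a;q)=\sum_{k=0}^n {n\brack k}(-1)^kq^{\binom k2}(aq^m)^kP_{n-k}(x,y)\,U_m(x,yq^{n-k},a;q). \]
   Context: $q$ is a fixed complex number with $0<|q|<1$; $(a;q)_n=\prod_{i=0}^{n-1}(1-aq^i)$; ${n\brack k}=\frac{(q;q)_n}{(q;q)_k(q;q)_{n-k}}$. The Cauchy polynomials are $P_n(x,y)=\prod_{i=0}^{n-1}(x-q^iy)$, and the Al-Salam–Carlitz polynomials are $U_n(x,y,a;q)=\sum_{k=0}^n{n\brack k}(-1)^kq^{\binom k2}a^kP_{n-k}(x,y)$. *)

(* Defs.v *)
From HB Require Import structures.
From mathcomp Require Import all_boot all_order all_algebra.
From mathcomp Require Import complex.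
From mathcomp Require Import reals.
Set Implicit Arguments. Unset Strict Implicit. Unset Printing Implicit Defensive.
Import Order.TTheory GRing.Theory Num.Theory.
Local Open Scope ring_scope.

Section Defs.
Variable (F : fieldType) (q : F).

Definition qpoch (a : F) (n : nat) : F := \prod_(i < n) (1 - a * q ^+ i).

Definition qbinom (n k : nat) : F := qpoch q n / (qpoch q k * qpoch q (n - k)).

Definition cauchyP (n : nat) (x y : F) : F := \prod_(i < n) (x - q ^+ i * y).

Definition alSalamU (n : nat) (x y a : F) : F :=
  \sum_(k < n.+1) qbinom n k * (-1) ^+ k * q ^+ 'C(k, 2) * a ^+ k
                  * cauchyP (n - k) x y.
End Defs.

(* Main.v *)
Require Import Defs.
From HB Require Import structures.
From mathcomp Require Import all_boot all_order all_algebra.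
From mathcomp Require Import ring zify.
From mathcomp Require Import complex reals.
Set Implicit Arguments. Unset Strict Implicit.
Import Order.TTheory GRing.Theory Num.Theory.
Local Open Scope ring_scope.

Section Gen.
Variable (F : fieldType) (q : F).
Hypothesis hq : forall j : nat, (0 < j)%N -> q ^+ j != 1.

Lemma qpochS n : qpoch q q n.+1 = qpoch q q n * (1 - q ^+ n.+1).
Proof. by rewrite /qpoch big_ord_recr /= exprS. Qed.

Lemma qpoch_neq0 n : qpoch q q n != 0.
Proof.
apply/prodf_neq0 => i _; rewrite -exprS subr_eq0 eq_sym; exact: hq.
Qed.

Lemma sub1_neq0 j : (0 < j)%N -> 1 - q ^+ j != 0.
Proof. by move=> h; rewrite subr_eq0 eq_sym hq. Qed.

Definition qb n k := if (k <= n)%N then qbinom q n k else 0.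

Lemma qbinom_n0 n : qbinom q n 0 = 1.
Proof.
rewrite /qbinom subn0 /qpoch big_ord0 mul1r divff //; exact: qpoch_neq0.
Qed.

Lemma qbinom_nn n : qbinom q n n = 1.
Proof.
rewrite /qbinom subnn /qpoch big_ord0 mulr1 divff //; exact: qpoch_neq0.
Qed.

Lemma qb0 n : qb n 0 = 1.
Proof. by rewrite /qb leq0n qbinom_n0. Qed.

Lemma qb_gt n k : (n < k)%N -> qb n k = 0.
Proof. by rewrite /qb ltnNge => /negbTE ->. Qed.

Lemma qb_mid k j :
  qbinom q (k + j).+2 k.+1 = q ^+ k.+1 * qbinom q (k+j).+1 k.+1 + qbinom q (k+j).+1 k
  /\ qbinom q (k + j).+2 k.+1 = qbinom q (k+j).+1 k.+1 + q ^+ j.+1 * qbinom q (k+j).+1 k.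
Proof.
rewrite /qbinom.
have -> : ((k + j).+2 - k.+1 = j.+1)%N by rewrite subSS -addnS addKn.
have -> : ((k + j).+1 - k.+1 = j)%N by rewrite subSS addKn.
have -> : ((k + j).+1 - k = j.+1)%N by rewrite -addnS addKn.
rewrite (qpochS (k+j).+1) (qpochS k) (qpochS j).
have e : q ^+ (k + j).+2 = q ^+ k.+1 * q ^+ j.+1 by rewrite -exprD addSn addnS.
rewrite e.
have hA := qpoch_neq0 k. have hB := qpoch_neq0 j.
have hu := (@sub1_neq0 k.+1 (ltn0Sn k)). have hv := (@sub1_neq0 j.+1 (ltn0Sn j)).
move: (qpoch q q (k+j).+1) (qpoch q q k) (qpoch q q j) (q ^+ k.+1) (q ^+ j.+1) hA hB hu hv.
move=> P A B u v hA hB hu hv.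
split; field; by rewrite hA hB hu hv.
Qed.

Lemma pascal1 n k : qb n.+1 k.+1 = q ^+ k.+1 * qb n k.+1 + qb n k.
Proof.
case: (ltngtP k n) => h.
- have [j ->] : exists j, n = (k + j).+1 by exists (n - k.+1)%N; lia.
  rewrite /qb !ifT; try lia.
  by case: (qb_mid k j).
- rewrite !qb_gt ?mulr0 ?addr0 //; exact: ltnW.
- by rewrite h (@qb_gt n n.+1 (ltnSn n)) mulr0 add0r /qb !leqnn !qbinom_nn.
Qed.

Lemma pascal2 n k : qb n.+1 k.+1 = qb n k.+1 + q ^+ (n - k) * qb n k.
Proof.
case: (ltngtP k n) => h.
- have [j ->] : exists j, n = (k + j).+1 by exists (n - k.+1)%N; lia.
  rewrite /qb !ifT; try lia.
  have -> : ((k + j).+1 - k = j.+1)%N by rewrite -addnS addKn.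
  by case: (qb_mid k j).
- rewrite !qb_gt ?mulr0 ?addr0 //; exact: ltnW.
- by rewrite h (@qb_gt n n.+1 (ltnSn n)) subnn expr0 mul1r add0r /qb !leqnn !qbinom_nn.
Qed.

Lemma sum_drop n (f : nat -> F) :
  \sum_(k < n.+2) qb n k * f k = \sum_(k < n.+1) qb n k * f k.
Proof. by rewrite big_ord_recr /= qb_gt // mul0r addr0. Qed.

Lemma sumP1 n (G : nat -> F) :
  \sum_(k < n.+2) qb n.+1 k * G k =
  \sum_(k < n.+1) q ^+ k * qb n k * G k + \sum_(k < n.+1) qb n k * G k.+1.
Proof.
rewrite big_ord_recl /= qb0.
under eq_bigr => i _ do rewrite /bump /= add1n pascal1 mulrDl.
rewrite big_split /= addrA; congr (_ + _).
transitivity (\sum_(k < n.+1) qb n k * (q ^+ k * G k)); last first.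
  by apply: eq_bigr => i _; rewrite mulrA (mulrC (qb _ _)).
have := sum_drop n (fun k => q ^+ k * G k) => /= <-.
rewrite [RHS]big_ord_recl /= qb0 expr0 !mul1r; congr (_ + _).
by apply: eq_bigr => i _; rewrite /bump /= add1n !mulrA (mulrC (qb _ _)).
Qed.

Lemma sumP2 n (G : nat -> F) :
  \sum_(k < n.+2) qb n.+1 k * G k =
  \sum_(k < n.+1) qb n k * G k + \sum_(k < n.+1) q ^+ (n - k) * qb n k * G k.+1.
Proof.
rewrite big_ord_recl /= qb0.
under eq_bigr => i _ do rewrite /bump /= add1n pascal2 mulrDl.
rewrite big_split /= addrA; congr (_ + _).
have := sum_drop n G => /= <-.
rewrite [RHS]big_ord_recl /= qb0.
by congr (_ + _); apply: eq_bigr => i _; rewrite /bump /= add1n.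
Qed.


Definition pz k (b : F) := (-1) ^+ k * q ^+ 'C(k, 2) * b ^+ k.
Definition U' m x y a := \sum_(k < m.+1) qb m k * (pz k a * cauchyP q (m - k) x y).

Lemma cauchyS n x y : cauchyP q n.+1 x y = cauchyP q n x y * (x - q ^+ n * y).
Proof. by rewrite /cauchyP big_ord_recr. Qed.

Lemma cauchySl n x y : cauchyP q n.+1 x y = (x - y) * cauchyP q n x (y * q).
Proof.
rewrite /cauchyP big_ord_recl /= expr0 mul1r; congr (_ * _).
by apply: eq_bigr => i _; rewrite /bump /= add1n exprSr -mulrA (mulrC q y).
Qed.

Lemma pzS k b : pz k.+1 b = pz k b * (- (q ^+ k * b)).
Proof.
rewrite /pz binS bin1 exprD !exprS; ring.
Qed.

Lemma pzq k b : pz k (b * q) = q ^+ k * pz k b.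
Proof. rewrite /pz exprMn; ring. Qed.

Lemma recU m x y a :
  U' m.+1 x y a = (x - y) * U' m x (y * q) a - a * q ^+ m * U' m x y a.
Proof.
rewrite /U' (sumP2 m (fun k => pz k a * cauchyP q (m.+1 - k) x y)).
congr (_ + _).
  rewrite big_distrr; apply: eq_bigr => [[i hi]] _ /=.
  rewrite subSn // cauchySl; ring.
rewrite big_distrr -sumrN; apply: eq_bigr => [[i hi]] _ /=.
rewrite subSS pzS.
have -> : q ^+ m = q ^+ (m - i) * q ^+ i by rewrite -exprD subnK.
ring.
Qed.

Lemma mainU x a n : forall m y, U' (n + m) x y a =
  \sum_(k < n.+1) qb n k * (pz k (a * q ^+ m) * cauchyP q (n - k) x y
      * U' m x (y * q ^+ (n - k)) a).
Proof.
elim: n => [|n IH] m y.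
  rewrite add0n big_ord1 qb0 /pz /cauchyP subnn big_ord0 expr0 !mulr1 /=.
  by rewrite !expr0 !mul1r.
rewrite addSnnS IH.
rewrite (sumP1 n (fun k => pz k (a * q ^+ m) * cauchyP q (n.+1 - k) x y
      * U' m x (y * q ^+ (n.+1 - k)) a)).
rewrite -big_split; apply: eq_bigr => [[k hk]] _ /=.
rewrite recU subSS subSn // cauchyS pzS exprSr (exprSr q (n - k)).
rewrite mulrA pzq.
rewrite [y * (_ * q)]mulrA; ring.
Qed.

End Gen.

Local Open Scope complex_scope.

Theorem mainTheorem3 (R : realType) (q : R[i]) (hq0 : 0 < `|q|) (hq1 : `|q| < 1)
    (x y a : R[i]) (n m : nat) :
  alSalamU q (n + m) x y a =
  \sum_(k < n.+1) qbinom q n k * (-1) ^+ k * q ^+ 'C(k, 2) * (a * q ^+ m) ^+ k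
                  * cauchyP q (n - k) x y * alSalamU q m x (y * q ^+ (n - k)) a.
Proof.
have hq' : forall j : nat, (0 < j)%N -> q ^+ j != 1.
  move=> j hj; apply/eqP => e.
  have h : `|q| ^+ j = 1 by rewrite -normrX e normr1.
  have := exprn_ilt1 j (normr_ge0 q) hq1.
  by rewrite h ltxx -lt0n hj.
have eU : forall N y', alSalamU q N x y' a = U' q N x y' a.
  move=> N y'; apply: eq_bigr => [[k hk]] _ /=.
  by rewrite /qb -ltnS hk /pz !mulrA.
rewrite eU (mainU hq' x a n m y).
apply: eq_bigr => [[k hk]] _ /=.
by rewrite eU /qb -ltnS hk /pz !mulrA.
Qed.
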